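(* Let $G$ be a graph whose minimum degree is $3$. Then $\mu(G)\leq 3$.
   Context: Multi-graphs have no self-loops; the skeleton of a multi-graph is its underlying simple graph. Each edge $e$ between $u$ and $v$ consists of two half-edges $e_u$ and $e_v$. A half-edge colouring is a function $c$ from the set of half-edges to $\mathbb{N}_0$; each edge $e$ also gets a weight $w(e)\in\mathbb{C}$. The weight of a perfect matching $P$ is $\prod_{e\in P}w(e)$. A vertex colouring is a map $vc:V\to\mathbb{N}_0$; it filters out the subgraph consisting of all edges $e$ (between $u,v$) with $c(e_u)=vc(u)$ and $c(e_v)=vc(v)$ (with the same weights). The weight of $vc$ is the sum of the weights of all perfect matchings of this filtered subgraph; $vc$ is feasible if the filtered subgraph has at least one perfect matching (an infeasible colouring has weight $0$). An edge-coloured edge-weighted multi-graph is GHZ if every feasible monochromatic vertex colouring has weight $1$ and every non-monochromatic vertex colouring has weight $0$; its dimension is the number of feasible monochromatic vertex colourings. For a simple graph $G$, the matching index $\mu(G)$ is the maximum (possibly $\infty$) of the dimension over all GHZ edge-coloured edge-weighted multi-graphs whose skeleton is $G$. *)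

(* Defs.v *)
From mathcomp Require Import all_boot all_algebra.
From mathcomp Require Import complex.
From mathcomp Require Import Rstruct.

Set Implicit Arguments.
Unset Strict Implicit.
Unset Printing Implicit Defensive.

Import GRing.Theory.
Local Open Scope ring_scope.

Notation Cplx := (Rdefinitions.R[i]).

Definition simple_graph (V : finType) (g : rel V) : Prop :=
  symmetric g /\ irreflexive g.

Definition degree (V : finType) (g : rel V) (v : V) : nat := #|[set u | g v u]|.

Definition min_degree_is (V : finType) (g : rel V) (k : nat) : Prop :=
  (forall v, k <= degree g v)%N /\ exists v, degree g v = k.

(** Multi-graphs on vertex set V: a finite type E of edges, each edge x
    having endpoints [ends x = (u, v)] with u <> v (no self-loops).
    The half-edges of x are (x, false) at (ends x).1 and (x, true) at
    (ends x).2. *)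
Definition no_self_loops (V E : finType) (ends : E -> V * V) : Prop :=
  forall x, (ends x).1 != (ends x).2.

Definition skeleton_is (V E : finType) (ends : E -> V * V) (g : rel V) : Prop :=
  forall u v, g u v = [exists x, (ends x == (u, v)) || (ends x == (v, u))].

Section Colourings.
Variables (V E : finType) (ends : E -> V * V).
Variables (c : E -> bool -> nat) (w : E -> Cplx).

Definition incident (v : V) (x : E) : bool :=
  ((ends x).1 == v) || ((ends x).2 == v).

Definition kept (vc : V -> nat) (x : E) : bool :=
  (c x false == vc (ends x).1) && (c x true == vc (ends x).2).

Definition perfect_matching (vc : V -> nat) (P : {set E}) : bool :=
  [forall x in P, kept vc x] &&
  [forall v : V, #|[set x in P | incident v x]| == 1%N].

Definition matching_weight (P : {set E}) : Cplx := \prod_(x in P) w x.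

Definition vc_weight (vc : V -> nat) : Cplx :=
  \sum_(P : {set E} | perfect_matching vc P) matching_weight P.

Definition feasible (vc : V -> nat) : bool :=
  [exists P : {set E}, perfect_matching vc P].

Definition monochromatic (vc : V -> nat) : Prop := forall u v, vc u = vc v.

Definition GHZ : Prop :=
  (forall vc : V -> nat, monochromatic vc -> feasible vc -> vc_weight vc = 1) /\
  (forall vc : V -> nat, ~ monochromatic vc -> vc_weight vc = 0).

Definition max_colour : nat := \max_(x : E) maxn (c x false) (c x true).

(* dimension = number of feasible monochromatic vertex colourings,
   i.e. number of colours k such that the constant colouring k is feasible.
   Such k are the colours of half-edges, hence <= max_colour. *)
Definition dimension : nat :=
  size [seq k <- iota 0 max_colour.+1 | feasible (fun _ => k)].

End Colourings.

(* Main.v *)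
Require Import Defs.
From mathcomp Require Import all_boot all_algebra ring.
From mathcomp Require Import complex Rstruct.
From Stdlib Require Import Classical FunctionalExtensionality.
Set Implicit Arguments. Unset Strict Implicit. Unset Printing Implicit Defensive.
Import GRing.Theory.
Local Open Scope ring_scope.

Section Main.
Variables (V E : finType) (ends : E -> V * V) (c : E -> bool -> nat) (w : E -> Cplx).
Variable v : V.
Hypothesis nsl : no_self_loops ends.

Definition hv x := (ends x).1 != v.
Definition oth x := if (ends x).1 == v then (ends x).2 else (ends x).1.
Definition wk vc x : Cplx := if kept ends c vc x then w x else 0.
Definition cnt (Q : {set E}) u := #|[set z in Q | incident ends u z]|.
Definition spm (P : {set E}) := [forall u : V, cnt P u == 1%N].
Definition qm y (Q : {set E}) :=
  [forall u : V, cnt Q u == (if (u == v) || (u == y) then 0 else 1)%N].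
Definition Gy y vc := \sum_(Q : {set E} | qm y Q) \prod_(z in Q) wk vc z.

Lemma W_spm vc : vc_weight ends c w vc = \sum_(P : {set E} | spm P) \prod_(z in P) wk vc z.
Proof.
rewrite /vc_weight /perfect_matching.
rewrite [LHS]big_mkcond [RHS]big_mkcond; apply: eq_bigr => P _.
rewrite /spm /cnt.
case: (boolP [forall u, _ == 1%N]) => Hs; last by rewrite andbF.
rewrite andbT.
case: (boolP [forall x in P, kept ends c vc x]) => Hk.
  rewrite /matching_weight; apply: eq_bigr => z zP.
  by rewrite /wk (forall_inP Hk z zP).
move: Hk => /forall_inPn [z zP nk].
by rewrite (bigD1 z zP) /= /wk (negbTE nk) mul0r.
Qed.

Lemma W_split vc : \sum_(P : {set E} | spm P) \prod_(z in P) wk vc z =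
  \sum_(x | incident ends v x) \sum_(P : {set E} | spm P && (x \in P)) \prod_(z in P) wk vc z.
Proof.
under [RHS]eq_bigr do rewrite big_mkcondr.
rewrite exchange_big /=; apply: eq_bigr => P sP.
rewrite -big_mkcondr /= sumr_const.
move: sP => /forallP /(_ v) /eqP; rewrite /cnt => H.
suff -> : #|[pred x | incident ends v x && (x \in P)]| = 1%N by rewrite mulr1n.
by rewrite -H; apply: eq_card => x; rewrite !inE andbC.
Qed.

Lemma inc_oth x : incident ends v x -> forall u, incident ends u x = (u == v) || (u == oth x).
Proof.
rewrite /incident /oth => Hx u.
case E1: ((ends x).1 == v); move: Hx; rewrite E1 /=.
  by move/eqP: E1 => ->; rewrite !(eq_sym u).
by move=> /eqP ->; rewrite orbC !(eq_sym u).
Qed.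

Lemma oth_neq x : incident ends v x -> oth x != v.
Proof.
rewrite /incident /oth => Hx; move: (nsl x).
case E1: ((ends x).1 == v); move: Hx; rewrite E1 /=.
  by move/eqP: E1 => ->; rewrite eq_sym.
by move=> /eqP ->; rewrite E1.
Qed.

Lemma cnt_U1 (x : E) (Q : {set E}) (u : V) : x \notin Q -> cnt (x |: Q) u = (incident ends u x + cnt Q u)%N.
Proof.
move=> xQ; rewrite /cnt.
case: (boolP (incident ends u x)) => ix.
  have -> : [set z in x |: Q | incident ends u z] = x |: [set z in Q | incident ends u z].
    by apply/setP => z; rewrite !inE; case: eqP => // ->; rewrite ix.
  by rewrite cardsU1 inE (negbTE xQ).
rewrite add0n; apply: eq_card => z; rewrite !inE; case: eqP => // ->.
by rewrite (negbTE ix) (negbTE xQ).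
Qed.

Lemma W_x vc x : incident ends v x ->
  \sum_(P : {set E} | spm P && (x \in P)) \prod_(z in P) wk vc z = wk vc x * Gy (oth x) vc.
Proof.
move=> ix.
rewrite (reindex_onto (fun Q => x |: Q) (fun P => P :\ x)); last first.
  by move=> P /andP [_ xP]; rewrite setD1K.
rewrite /Gy big_distrr /=.
have qx : forall Q, qm (oth x) Q -> x \notin Q.
  move=> Q /forallP /(_ v); rewrite eqxx /= /cnt cards_eq0 => /eqP H0.
  apply/negP => xQ.
  have : x \in [set z in Q | incident ends v z] by rewrite inE xQ ix.
  by rewrite H0 inE.
apply: eq_big => Q.
  rewrite setU11 andbT.
  case: (boolP (x \in Q)) => xQ.
    have -> : qm (oth x) Q = false by apply/negP => /qx; rewrite xQ.
    apply/negbTE; rewrite negb_and; apply/orP; right.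
    apply/eqP => H; have : x \in (x |: Q) :\ x by rewrite H.
    by rewrite setD11.
  rewrite setU1K // eqxx andbT /spm /qm; apply: eq_forallb => u.
  rewrite cnt_U1 // (inc_oth ix).
  by case: (_ || _); rewrite ?add1n ?add0n ?eqSS.
move=> /andP [_ /eqP H].
have xQ : x \notin Q by rewrite -H setD11.
by rewrite big_setU1.
Qed.

Lemma W_decomp vc : vc_weight ends c w vc = \sum_(x | incident ends v x) wk vc x * Gy (oth x) vc.
Proof. rewrite W_spm W_split; apply: eq_bigr => x ix; exact: W_x. Qed.

Lemma qm_noinc y Q z u : qm y Q -> z \in Q -> (u == v) || (u == y) -> ~~ incident ends u z.
Proof.
move=> /forallP /(_ u) + zQ Hu; rewrite Hu /cnt cards_eq0 => /eqP H0.
apply/negP => iz.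
have : z \in [set z in Q | incident ends u z] by rewrite inE zQ iz.
by rewrite H0 inE.
Qed.

Lemma Gy_local y vc1 vc2 : (forall u, u != v -> u != y -> vc1 u = vc2 u) -> Gy y vc1 = Gy y vc2.
Proof.
move=> H; apply: eq_bigr => Q qQ; apply: eq_bigr => z zQ.
have := qm_noinc qQ zQ (u := v); rewrite eqxx /= /incident negb_or => /(_ isT) /andP [h1 h2].
have := qm_noinc qQ zQ (u := y); rewrite eqxx orbT /incident negb_or => /(_ isT) /andP [h3 h4].
rewrite /wk /kept !H // eq_sym //.
Qed.

Lemma wk_inc vc x : incident ends v x ->
  wk vc x = w x * (c x (hv x) == vc v)%:R * (c x (~~ hv x) == vc (oth x))%:R.
Proof.
rewrite /wk /kept /hv /oth /incident.
case E1: ((ends x).1 == v) => /= E2.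
  rewrite (eqP E1).
  by case: (c x false == _); case: (c x true == _); rewrite /= ?mulr1 ?mulr0 ?mul0r.
rewrite (eqP E2).
by case: (c x false == _); case: (c x true == _); rewrite /= ?mulr1 ?mulr0 ?mul0r.
Qed.

Definition lp (s : 'I_4 -> nat) y (jv jy : 'I_4) : Cplx :=
  \sum_(x | incident ends v x && (oth x == y))
     w x * (c x (hv x) == s jv)%:R * (c x (~~ hv x) == s jy)%:R.

Lemma part s y jv jy vc : vc v = s jv -> vc y = s jy ->
  \sum_(x | incident ends v x && (oth x == y)) wk vc x * Gy (oth x) vc = Gy y vc * lp s y jv jy.
Proof.
move=> H1 H2; rewrite /lp big_distrr; apply: eq_bigr => x /andP [ix /eqP ox].
by rewrite wk_inc // ox H1 H2 mulrC.
Qed.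

End Main.
Section Sums.
Variable R : comRingType.
Notation I4 := 'I_4.

Lemma sum4D (F G : I4 -> I4 -> I4 -> I4 -> R) :
  \sum_i1 \sum_i2 \sum_i3 \sum_i4 (F i1 i2 i3 i4 + G i1 i2 i3 i4) =
  \sum_i1 \sum_i2 \sum_i3 \sum_i4 F i1 i2 i3 i4 + \sum_i1 \sum_i2 \sum_i3 \sum_i4 G i1 i2 i3 i4.
Proof.
rewrite -big_split; apply: eq_bigr => i1 _; rewrite -big_split; apply: eq_bigr => i2 _.
rewrite -big_split; apply: eq_bigr => i3 _; by rewrite -big_split.
Qed.

Lemma sum4_fac (F G : I4 -> I4 -> R) :
  \sum_i1 \sum_i2 \sum_i3 \sum_i4 (F i1 i2 * G i3 i4) =
  (\sum_i1 \sum_i2 F i1 i2) * (\sum_i3 \sum_i4 G i3 i4).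
Proof.
rewrite big_distrl; apply: eq_bigr => i1 _; rewrite big_distrl; apply: eq_bigr => i2 _.
rewrite big_distrr; apply: eq_bigr => i3 _; by rewrite big_distrr.
Qed.

Lemma sum4_fac_b (F G : I4 -> I4 -> R) :
  \sum_i1 \sum_i2 \sum_i3 \sum_i4 (F i1 i3 * G i2 i4) =
  (\sum_i1 \sum_i2 F i1 i2) * (\sum_i3 \sum_i4 G i3 i4).
Proof.
rewrite -sum4_fac; apply: eq_bigr => i1 _; exact: exchange_big.
Qed.

Lemma sum4_fac_c (F G : I4 -> I4 -> R) :
  \sum_i1 \sum_i2 \sum_i3 \sum_i4 (F i1 i4 * G i2 i3) =
  (\sum_i1 \sum_i2 F i1 i2) * (\sum_i3 \sum_i4 G i3 i4).
Proof.
rewrite -sum4_fac; apply: eq_bigr => i1 _.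
under eq_bigr do rewrite exchange_big.
exact: exchange_big.
Qed.

Lemma sum4_single (F : I4 -> I4 -> I4 -> I4 -> R) k0 :
  (forall i1 i2 i3 i4, ~~ [&& i1 == k0, i2 == k0, i3 == k0 & i4 == k0] -> F i1 i2 i3 i4 = 0) ->
  \sum_i1 \sum_i2 \sum_i3 \sum_i4 F i1 i2 i3 i4 = F k0 k0 k0 k0.
Proof.
move=> H.
rewrite (bigD1 k0) //= [X in _ + X]big1 ?addr0; last first.
  move=> i1 n1; apply: big1 => i2 _; apply: big1 => i3 _; apply: big1 => i4 _.
  by apply: H; rewrite (negbTE n1).
rewrite (bigD1 k0) //= [X in _ + X]big1 ?addr0; last first.
  move=> i2 n2; apply: big1 => i3 _; apply: big1 => i4 _.
  by apply: H; rewrite (negbTE n2) andbF.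
rewrite (bigD1 k0) //= [X in _ + X]big1 ?addr0; last first.
  move=> i3 n3; apply: big1 => i4 _.
  by apply: H; rewrite (negbTE n3) !andbF.
rewrite (bigD1 k0) //= [X in _ + X]big1 ?addr0 //.
by move=> i4 n4; apply: H; rewrite (negbTE n4) !andbF.
Qed.
End Sums.

Section TT.
Variables (V E : finType) (ends : E -> V * V) (c : E -> bool -> nat) (w : E -> Cplx).
Variables (v na nb nc : V).
Hypothesis nsl : no_self_loops ends.
Hypotheses (Hav : na != v) (Hbv : nb != v) (Hcv : nc != v) (Hab : na != nb) (Hac : na != nc) (Hbc : nb != nc).
Hypothesis Hoth : forall x, incident ends v x ->
  [|| oth ends v x == na, oth ends v x == nb | oth ends v x == nc].
Variables (s : 'I_4 -> nat) (k0 : 'I_4).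

Definition col (jv ja jb jc : 'I_4) : V -> nat := fun u =>
  s (if u == v then jv else if u == na then ja else if u == nb then jb
     else if u == nc then jc else k0).

Lemma col_v jv ja jb jc : col jv ja jb jc v = s jv.
Proof. by rewrite /col eqxx. Qed.
Lemma col_a jv ja jb jc : col jv ja jb jc na = s ja.
Proof. by rewrite /col (negbTE Hav) eqxx. Qed.
Lemma col_b jv ja jb jc : col jv ja jb jc nb = s jb.
Proof. by rewrite /col (negbTE Hbv) eq_sym (negbTE Hab) eqxx. Qed.
Lemma col_c jv ja jb jc : col jv ja jb jc nc = s jc.
Proof. by rewrite /col (negbTE Hcv) eq_sym (negbTE Hac) eq_sym (negbTE Hbc) eqxx. Qed.

Notation G := (Gy ends c w v).
Notation lp' := (lp ends c w v s).

Lemma W_col jv ja jb jc :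
  vc_weight ends c w (col jv ja jb jc) =
  G na (col jv ja jb jc) * lp' na jv ja + G nb (col jv ja jb jc) * lp' nb jv jb
  + G nc (col jv ja jb jc) * lp' nc jv jc.
Proof.
rewrite (W_decomp ends c w v).
rewrite (bigID (fun x => oth ends v x == na)) /=.
rewrite [X in _ + X](bigID (fun x => oth ends v x == nb)) /=.
rewrite -[RHS]addrA.
rewrite (part ends c w (col_v _ _ _ _) (col_a _ _ _ _)).
congr (_ + (_ + _)).
  rewrite -(part ends c w (col_v _ _ _ _) (col_b jv ja jb jc)).
  apply: eq_bigl => x; case: (boolP (oth ends v x == nb)); rewrite ?andbF ?andbT //.
  by move=> /eqP ->; rewrite eq_sym Hab andbT.
rewrite -(part ends c w (col_v _ _ _ _) (col_c jv ja jb jc)).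
apply: eq_bigl => x; case: (boolP (incident ends v x)) => //= ix.
have := Hoth ix.
case: (eqVneq (oth ends v x) nc) => [-> _ | ne]; first by rewrite ![nc == _]eq_sym Hac Hbc.
rewrite orbF.
by case: (oth ends v x == na); case: (oth ends v x == nb).
Qed.

Definition lsum y (j : 'I_4) := \sum_(jv : 'I_4) lp' y jv j.

Definition TT (hA hB hC : 'I_4 -> Cplx) :=
  \sum_(jv : 'I_4) \sum_(ja : 'I_4) \sum_(jb : 'I_4) \sum_(jc : 'I_4)
    hA ja * hB jb * hC jc * vc_weight ends c w (col jv ja jb jc).

Lemma orth_sum (h : 'I_4 -> Cplx) y :
  \sum_j h j * lsum y j = 0 -> \sum_(jv : 'I_4) \sum_(j : 'I_4) h j * lp' y jv j = 0.
Proof.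
move=> H; rewrite exchange_big /= -[RHS]H; apply: eq_bigr => j _.
by rewrite /lsum big_distrr.
Qed.

Lemma TT_zero hA hB hC :
  \sum_j hA j * lsum na j = 0 -> \sum_j hB j * lsum nb j = 0 -> \sum_j hC j * lsum nc j = 0 ->
  TT hA hB hC = 0.
Proof.
move=> oA oB oC; rewrite /TT.
have HE : forall jv ja jb jc, hA ja * hB jb * hC jc * vc_weight ends c w (col jv ja jb jc) =
  (hA ja * lp' na jv ja) * (hB jb * hC jc * G na (col ord0 ord0 jb jc))
  + ((hB jb * lp' nb jv jb) * (hA ja * hC jc * G nb (col ord0 ja ord0 jc))
  + (hC jc * lp' nc jv jc) * (hA ja * hB jb * G nc (col ord0 ja jb ord0))).
  move=> jv ja jb jc; rewrite W_col.
  rewrite (@Gy_local _ _ ends c w v na (col jv ja jb jc) (col ord0 ord0 jb jc)); last first.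
    by move=> u /negbTE uv /negbTE ua; rewrite /col uv ua.
  rewrite (@Gy_local _ _ ends c w v nb (col jv ja jb jc) (col ord0 ja ord0 jc)); last first.
    by move=> u /negbTE uv /negbTE ub; rewrite /col uv ub.
  rewrite (@Gy_local _ _ ends c w v nc (col jv ja jb jc) (col ord0 ja jb ord0)); last first.
    by move=> u /negbTE uv /negbTE uc; rewrite /col uv uc.
  ring.
under eq_bigr do under eq_bigr do under eq_bigr do under eq_bigr do rewrite HE.
rewrite !sum4D.
rewrite (sum4_fac (fun jv ja => hA ja * lp' na jv ja) (fun jb jc => hB jb * hC jc * G na (col ord0 ord0 jb jc))).
rewrite (sum4_fac_b (fun jv jb => hB jb * lp' nb jv jb) (fun ja jc => hA ja * hC jc * G nb (col ord0 ja ord0 jc))).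
rewrite (sum4_fac_c (fun jv jc => hC jc * lp' nc jv jc) (fun ja jb => hA ja * hB jb * G nc (col ord0 ja jb ord0))).
by rewrite !orth_sum // !mul0r !addr0.
Qed.

Lemma TT_val hA hB hC :
  GHZ ends c w -> feasible ends c (fun _ => s k0) -> injective s ->
  (forall k, k != k0 -> hA k * hB k * hC k = 0) ->
  TT hA hB hC = hA k0 * hB k0 * hC k0.
Proof.
move=> [g1 g2] fk0 sinj hiv.
rewrite /TT (sum4_single (k0 := k0)).
  have -> : col k0 k0 k0 k0 = (fun _ => s k0).
    by apply: functional_extensionality => u; rewrite /col; repeat case: ifP.
  by rewrite g1 // mulr1.
move=> jv ja jb jc Hn.
case: (classic (monochromatic (col jv ja jb jc))) => [Hm | Hm]; last by rewrite (g2 _ Hm) mulr0.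
have e1 := Hm v na; rewrite col_v col_a in e1; move/sinj: e1 => e1.
have e2 := Hm na nb; rewrite col_a col_b in e2; move/sinj: e2 => e2.
have e3 := Hm nb nc; rewrite col_b col_c in e3; move/sinj: e3 => e3.
move: Hn; rewrite -e3 -e2 -e1 !andbb => Hn.
by rewrite hiv // mul0r.
Qed.
End TT.

Lemma sum_delta (F : 'I_4 -> Cplx) k : \sum_j (j == k)%:R * F j = F k.
Proof.
rewrite (bigD1 k) //= eqxx mul1r big1 ?addr0 // => j /negbTE ->.
by rewrite mul0r.
Qed.

Definition hfun (l : 'I_4 -> Cplx) (k0 i : 'I_4) : 'I_4 -> Cplx := fun j =>
  if l k0 == 0 then (j == k0)%:R else l i * (j == k0)%:R - l k0 * (j == i)%:R.

Lemma h_orth l k0 i : \sum_j hfun l k0 i j * l j = 0.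
Proof.
rewrite /hfun; case H: (l k0 == 0).
  by rewrite sum_delta (eqP H).
have HE : forall j, (l i * (j == k0)%:R - l k0 * (j == i)%:R) * l j =
   (j == k0)%:R * (l i * l j) - (j == i)%:R * (l k0 * l j) by move=> j; ring.
under eq_bigr do rewrite HE.
by rewrite sumrB !sum_delta mulrC subrr.
Qed.

Lemma h_k0 l k0 i : i != k0 -> (l k0 == 0) || (l i != 0) -> hfun l k0 i k0 != 0.
Proof.
move=> ne; rewrite /hfun; case: ifP => [_ _|_ /= Hi]; first by rewrite eqxx oner_neq0.
by rewrite eqxx [k0 == i]eq_sym (negbTE ne) mulr0 subr0 mulr1.
Qed.

Lemma h_supp l k0 i j : j != k0 -> j != i -> hfun l k0 i j = 0.
Proof.
move=> /negbTE h1 /negbTE h2; rewrite /hfun h1 h2; case: ifP => _ //.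
by rewrite !mulr0 subr0.
Qed.

Definition condp (p : nat -> nat -> bool) (k0 sa sb sc : nat) :=
  uniq [:: k0; sa; sb; sc] && (~~ p 0%N k0 || p 0%N sa) && (~~ p 1%N k0 || p 1%N sb)
  && (~~ p 2%N k0 || p 2%N sc).
Definition searchp p := has (fun k0 => has (fun sa => has (fun sb => has (fun sc =>
  condp p k0 sa sb sc) (iota 0 4)) (iota 0 4)) (iota 0 4)) (iota 0 4).
Definition pat (l : seq (seq bool)) y k := nth false (nth [::] l y) k.
Lemma comb_bool a0 a1 a2 a3 b0 b1 b2 b3 c0 c1 c2 c3 :
  searchp (pat [:: [:: a0;a1;a2;a3]; [:: b0;b1;b2;b3]; [:: c0;c1;c2;c3]]).
Proof.
by case: a0; case: a1; case: a2; case: a3; case: b0; case: b1; case: b2; case: b3;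
  case: c0; case: c1; case: c2; case: c3; vm_compute.
Qed.

Lemma nthE (f : 'I_4 -> bool) k : (k < 4)%N ->
  nth false [:: f (inord 0); f (inord 1); f (inord 2); f (inord 3)] k = f (inord k).
Proof. by case: k => [|[|[|[|k]]]]. Qed.

Lemma inord_neq (a b : nat) : (a < 4)%N -> (b < 4)%N -> a != b -> (inord a : 'I_4) != inord b.
Proof.
move=> ha hb ne; apply/eqP => /(congr1 val); rewrite /= !inordK //.
by apply/eqP.
Qed.

Lemma choose_h (la lb lc : 'I_4 -> Cplx) : exists k0 hA hB hC,
  [/\ \sum_j hA j * la j = 0, \sum_j hB j * lb j = 0, \sum_j hC j * lc j = 0,
      hA k0 * hB k0 * hC k0 != 0 &
      forall k, k != k0 -> hA k * hB k * hC k = 0].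
Proof.
have := comb_bool (la (inord 0) != 0) (la (inord 1) != 0) (la (inord 2) != 0) (la (inord 3) != 0)
  (lb (inord 0) != 0) (lb (inord 1) != 0) (lb (inord 2) != 0) (lb (inord 3) != 0)
  (lc (inord 0) != 0) (lc (inord 1) != 0) (lc (inord 2) != 0) (lc (inord 3) != 0).
move=> /hasP [k0 k0i /hasP [sa sai /hasP [sb sbi /hasP [sc sci]]]].
move: k0i sai sbi sci; rewrite !mem_iota /= !add0n => k0i sai sbi sci.
rewrite /condp /pat /= !(nthE (fun j => la j != 0)) // !(nthE (fun j => lb j != 0)) // !(nthE (fun j => lc j != 0)) //.
move=> /andP [/andP [/andP [U Ha] Hb] Hc].
move: U => /and4P [U1 U2 U3 _].
have n1 : k0 != sa by apply: contraNneq U1 => ->; rewrite !inE eqxx.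
have n2 : k0 != sb by apply: contraNneq U1 => ->; rewrite !inE eqxx orbT.
have n3 : k0 != sc by apply: contraNneq U1 => ->; rewrite !inE eqxx !orbT.
have n4 : sa != sb by apply: contraNneq U2 => ->; rewrite !inE eqxx.
exists (inord k0), (hfun la (inord k0) (inord sa)), (hfun lb (inord k0) (inord sb)),
  (hfun lc (inord k0) (inord sc)).
have na0 : (inord sa : 'I_4) != inord k0 by apply: inord_neq; rewrite // eq_sym.
have nb0 : (inord sb : 'I_4) != inord k0 by apply: inord_neq; rewrite // eq_sym.
have nc0 : (inord sc : 'I_4) != inord k0 by apply: inord_neq; rewrite // eq_sym.
have nab : (inord sa : 'I_4) != inord sb by apply: inord_neq.
split; rewrite ?h_orth //.
  rewrite !mulf_neq0 // h_k0 //.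
  - by move: Ha; rewrite negbK.
  - by move: Hb; rewrite negbK.
  - by move: Hc; rewrite negbK.
move=> k nk.
case: (eqVneq k (inord sa)) => [ka | ka].
  rewrite [hfun lb _ _ k]h_supp ?mulr0 ?mul0r //.
  by rewrite ka.
by rewrite [hfun la _ _ k]h_supp ?mulr0 ?mul0r.
Qed.

Theorem theorem6 (V : finType) (g : rel V) :
  simple_graph g -> min_degree_is g 3 ->
  forall (E : finType) (ends : E -> V * V) (c : E -> bool -> nat) (w : E -> Cplx),
    no_self_loops ends -> skeleton_is ends g ->
    GHZ ends c w ->
    (dimension ends c <= 3)%N.
Proof.
move=> [gsym girr] [_ [v Hv]] E ends c w nsl skel ghz.
rewrite leqNgt; apply/negP => Hd.
rewrite /dimension in Hd.
set L := filter _ _ in Hd.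
have uL : uniq L by rewrite filter_uniq // iota_uniq.
pose s (j : 'I_4) := nth 0%N L j.
have sz : forall j : 'I_4, (j < size L)%N by move=> j; exact: leq_trans (ltn_ord j) Hd.
have sinj : injective s.
  by move=> j1 j2 /eqP; rewrite /s nth_uniq // => /eqP /val_inj.
have sfeas : forall j, feasible ends c (fun _ => s j).
  move=> j; have : s j \in L by apply: mem_nth.
  by rewrite mem_filter => /andP [].
move: Hv; rewrite /degree cardE.
case HN: (enum [set u | g v u]) => [|na [|nb [|nc [|]]]] //= _.
have uN : uniq [:: na; nb; nc] by rewrite -HN enum_uniq.
have inN : forall u, (u \in [:: na; nb; nc]) = g v u.
  by move=> u; rewrite -HN mem_enum inE.
have nv : forall u, u \in [:: na; nb; nc] -> u != v.
  move=> u; rewrite inN => guv; apply/eqP => uv; move: guv; by rewrite uv girr.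
have Hav : na != v by apply: nv; rewrite !inE eqxx.
have Hbv : nb != v by apply: nv; rewrite !inE eqxx orbT.
have Hcv : nc != v by apply: nv; rewrite !inE eqxx !orbT.
move: uN; rewrite /= !inE !negb_or => /andP [/andP [Hab Hac] /andP [Hbc _]].
have Hoth : forall x, incident ends v x ->
  [|| oth ends v x == na, oth ends v x == nb | oth ends v x == nc].
  move=> x ix.
  have : oth ends v x \in [:: na; nb; nc].
    rewrite inN skel; apply/existsP; exists x.
    move: ix; rewrite /incident /oth.
    case: (ends x) => p q /=.
    case: (eqVneq p v) => [-> _ | _ /= /eqP ->]; first by rewrite eqxx.
    by rewrite eqxx orbT.
  by rewrite !inE.
have [k0 [hA [hB [hC [oA oB oC nz iv]]]]] :=
  choose_h (lsum ends c w v s na) (lsum ends c w v s nb) (lsum ends c w v s nc).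
have := TT_zero Hav Hbv Hcv Hab Hac Hbc Hoth k0 oA oB oC.
rewrite (TT_val Hav Hbv Hcv Hab Hac Hbc ghz (sfeas k0) sinj iv).
by move/eqP; rewrite (negbTE nz).
Qed.
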